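(* For every graph $G=(V,E)$, the star inequalities $$x(W)+(|W|-1)x_w\le |W|\qquad\text{for all } w\in V \text{ and } W\subseteq N(w)$$ are valid for $\mathcal{P}(G)$. Moreover, if $G$ is a tree, each of these inequalities defines a facet of $\mathcal{P}(G)$.
   Context: All graphs are simple and connected; a tree is a connected graph with no cycle. $N(w)$ is the neighborhood of $w$, $x(A)=\sum_{a\in A}x_a$. A co-2-plex is a vertex set inducing a subgraph of maximum degree at most 1. $\mathcal{P}(G)=\mathrm{conv}\{\chi^S : S\text{ co-2-plex of } G\}\subseteq\mathbb{R}^V$. *)

(* Defs.v *)
From mathcomp Require Import all_boot all_order all_algebra.
Set Implicit Arguments. Unset Strict Implicit. Unset Printing Implicit Defensive.
Import Order.TTheory GRing.Theory Num.Theory.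
Local Open Scope ring_scope.

Definition simple_graph (T : finType) (e : rel T) : Prop :=
  symmetric e /\ irreflexive e.

Definition connected_graph (T : finType) (e : rel T) : Prop :=
  forall x y : T, connect e x y.

Definition acyclic_graph (T : finType) (e : rel T) : Prop :=
  ~ (exists s : seq T, (3 <= size s)%N /\ ucycle e s).

Definition tree (T : finType) (e : rel T) : Prop :=
  connected_graph e /\ acyclic_graph e.

Definition nbhd (T : finType) (e : rel T) (w : T) : {set T} := [set v | e w v].

Definition co2plex (T : finType) (e : rel T) (S : {set T}) : Prop :=
  forall v, v \in S -> (#|[set u in S | e v u]| <= 1)%N.

Definition chi (R : nzRingType) (T : finType) (S : {set T}) : T -> R :=
  fun v => (v \in S)%:R.

Definition conv_hull (R : realFieldType) (T : finType) (X : (T -> R) -> Prop)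
  : (T -> R) -> Prop :=
  fun x => exists (k : nat) (p : 'I_k -> T -> R) (lam : 'I_k -> R),
    (forall i, X (p i)) /\ (forall i, 0 <= lam i) /\ \sum_i lam i = 1 /\
    (forall t, x t = \sum_i lam i * p i t).

Definition co2plex_polytope (R : realFieldType) (T : finType) (e : rel T)
  : (T -> R) -> Prop :=
  conv_hull (fun y => exists S : {set T}, co2plex e S /\ y = chi R S).

Definition aff_indep (R : realFieldType) (T : finType) (k : nat)
  (p : 'I_k -> T -> R) : Prop :=
  forall c : 'I_k -> R, \sum_i c i = 0 -> (forall t, \sum_i c i * p i t = 0) ->
    forall i, c i = 0.

Definition aff_dim (R : realFieldType) (T : finType) (X : (T -> R) -> Prop)
  (d : nat) : Prop :=
  (exists p : 'I_d.+1 -> T -> R, (forall i, X (p i)) /\ aff_indep p) /\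
  (forall (k : nat) (p : 'I_k.+1 -> T -> R),
     (forall i, X (p i)) -> aff_indep p -> (k <= d)%N).

Definition valid_ineq (R : realFieldType) (T : finType) (P : (T -> R) -> Prop)
  (a : T -> R) (b : R) : Prop :=
  forall x, P x -> \sum_t a t * x t <= b.

Definition defines_facet (R : realFieldType) (T : finType)
  (P : (T -> R) -> Prop) (a : T -> R) (b : R) : Prop :=
  valid_ineq P a b /\
  exists d : nat, aff_dim P d.+1 /\
    aff_dim (fun x => P x /\ \sum_t a t * x t = b) d.

(* coefficient vector of the star inequality x(W) + (|W|-1) x_w <= |W| *)
Definition star_coef (R : nzRingType) (T : finType) (w : T) (W : {set T})
  : T -> R :=
  fun v => (v \in W)%:R + (if v == w then #|W|%:R - 1 else 0).

Arguments co2plex_polytope R {T} e.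
Arguments star_coef R {T} w W.
Arguments chi R {T} S.

(* Main.v *)
Require Import Defs.
From mathcomp Require Import all_boot all_order all_algebra zify.
Import Order.TTheory GRing.Theory Num.Theory.
Local Open Scope ring_scope.

Lemma sum_chi (R : realFieldType) (T : finType) (X : {set T}) :
  \sum_t ((t \in X)%:R : R) = #|X|%:R.
Proof.
rewrite -natr_sum; congr (_%:R).
by rewrite -sum1_card [RHS]big_mkcond /=; apply: eq_bigr => t _; case: (t \in X).
Qed.

Lemma star_sum (R : realFieldType) (T : finType) (w : T) (W S : {set T}) :
  \sum_t star_coef R w W t * chi R S t =
  #|W :&: S|%:R + (w \in S)%:R * (#|W|%:R - 1).
Proof.
rewrite /star_coef /chi; under eq_bigr do rewrite mulrDl.
rewrite big_split /=; congr (_ + _).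
  by rewrite -sum_chi; apply: eq_bigr => t _; rewrite inE -natrM mulnb.
rewrite (bigD1 w) //= eqxx big1 => [|t /negbTE ->]; last by rewrite mul0r.
by rewrite addr0 mulrC.
Qed.

Lemma co2plex_small (T : finType) (e : rel T) (S : {set T}) :
  irreflexive e -> (#|S| <= 2)%N -> co2plex e S.
Proof.
move=> irr HS v vS.
have sub : [set u in S | e v u] \subset S :\ v.
  apply/subsetP => u; rewrite !inE => /andP [uS evu]; rewrite uS andbT.
  by apply: contraTneq evu => ->; rewrite irr.
apply: leq_trans (subset_leq_card sub) _.
move: HS; rewrite (cardsD1 v S) vS; lia.
Qed.

Lemma valid_chi (R : realFieldType) (T : finType) (e : rel T) (w : T) (W S : {set T}) :
  W \subset nbhd e w -> co2plex e S ->
  #|W :&: S|%:R + (w \in S)%:R * (#|W|%:R - 1) <= (#|W|%:R : R).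
Proof.
move=> sW cS; case wS: (w \in S); last first.
  by rewrite mul0r addr0 ler_nat subset_leq_card // subsetIl.
have h1 : (#|W :&: S| <= 1)%N.
  apply: leq_trans (cS w wS); apply: subset_leq_card; apply/subsetP => u.
  rewrite !inE => /andP [uW uS]; rewrite uS /=.
  by have := subsetP sW u uW; rewrite inE.
rewrite mul1r addrC -addrA -lerBrDl addrC subrr.
have : (#|W :&: S|%:R : R) <= 1 by rewrite -(ler_nat R) in h1.
by rewrite subr_le0.
Qed.
Lemma no_triangle (T : finType) (e : rel T) (w u1 u2 : T) :
  simple_graph e -> acyclic_graph e -> e w u1 -> e w u2 -> ~~ e u1 u2.
Proof.
move=> [sym irr] ac h1 h2; apply/negP => h3; apply: ac.
exists [:: w; u1; u2]; split => //.
have n1 : w != u1 by apply: contraTneq h1 => ->; rewrite irr.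
have n2 : w != u2 by apply: contraTneq h2 => ->; rewrite irr.
have n3 : u1 != u2 by apply: contraTneq h3 => ->; rewrite irr.
rewrite /ucycle /= h1 h3 (sym u2) h2 !inE negb_or n1 n2 n3.
done.
Qed.

Lemma no_square (T : finType) (e : rel T) (w v u1 u2 : T) :
  simple_graph e -> acyclic_graph e -> e w u1 -> e w u2 -> e v u1 -> e v u2 ->
  v != w -> u1 != u2 -> u1 = u2.
Proof.
move=> [sym irr] ac h1 h2 h3 h4 nvw n12; exfalso; apply: ac.
exists [:: w; u1; v; u2]; split => //.
have n1 : w != u1 by apply: contraTneq h1 => ->; rewrite irr.
have n2 : w != u2 by apply: contraTneq h2 => ->; rewrite irr.
have n3 : v != u1 by apply: contraTneq h3 => ->; rewrite irr.
have n4 : v != u2 by apply: contraTneq h4 => ->; rewrite irr.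
rewrite /ucycle /= h1 (sym u1) h3 h4 (sym u2) h2 !inE !negb_or n1 n2 n12 eq_sym nvw /=.
by rewrite eq_sym n3 n4.
Qed.
Lemma aff_bound (R : realFieldType) (T : finType) (m : nat) (p : 'I_m -> T -> R) (A : {set T}) :
  (forall c : 'I_m -> R, \sum_i c i = 0 ->
     (forall t, t \in A -> \sum_i c i * p i t = 0) -> forall i, c i = 0) ->
  (m <= #|A|.+1)%N.
Proof.
move=> H.
pose M : 'M[R]_(m, #|A|.+1) := \matrix_(i, j) (if unlift ord0 j is Some j' then p i (enum_val j') else 1).
have rf : row_free M.
  rewrite -kermx_eq0; apply/eqP/row_matrixP => k; rewrite row0.
  set u := row k (kermx M).
  have uM : u *m M = 0 by apply/sub_kermxP; rewrite row_sub.
  apply/rowP => i; rewrite [RHS]mxE.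
  apply: (H (fun i => u 0 i)) => [|t tA].
    have := congr1 (fun X : 'M_(1, _) => X 0 ord0) uM.
    rewrite !mxE => E; rewrite -[RHS]E; apply: eq_bigr => j _; rewrite [M _ _]mxE unlift_none mulr1 //.
  have := congr1 (fun X : 'M_(1, _) => X 0 (lift ord0 (enum_rank_in tA t))) uM.
  rewrite !mxE => E; rewrite -[RHS]E; apply: eq_bigr => j _; rewrite [M _ _]mxE liftK enum_rankK_in //.
have := rank_leq_col M.
by rewrite (eqP rf).
Qed.
Lemma sum_enum (R : realFieldType) (U : finType) (F : U -> R) :
  \sum_u F u = \sum_(i < #|U|) F (enum_val i).
Proof. by rewrite -big_enum_val; apply: eq_bigl. Qed.

Definition aff_indepU (R : realFieldType) (T U : finType) (q : U -> T -> R) :=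
  forall c : U -> R, \sum_u c u = 0 -> (forall t, \sum_u c u * q u t = 0) -> forall u, c u = 0.

Arguments aff_indepU {R T U}.

Lemma transfer (R : realFieldType) (T U : finType) (q : U -> T -> R) m :
  #|U| = m -> aff_indepU q ->
  exists p : 'I_m -> T -> R, (forall i, exists u, p i = q u) /\ aff_indep p.
Proof.
move=> <- H; exists (fun i => q (enum_val i)); split=> [i|c c0 ct i]; first by exists (enum_val i).
have := H (fun u => c (enum_rank u)).
rewrite sum_enum; under eq_bigr do rewrite enum_valK.
move=> /(_ c0) H2.
have : c (enum_rank (enum_val i)) = 0.
  apply: H2 => t; rewrite sum_enum -[RHS](ct t).
  by apply: eq_bigr => j _; rewrite enum_valK.
by rewrite enum_valK.
Qed.

Lemma sum_pick (R : realFieldType) (T : finType) (a : T) (f : T -> R) :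
  \sum_v ((v == a)%:R * f v) = f a.
Proof.
rewrite (bigD1 a) //= eqxx mul1r big1 ?addr0 // => v /negbTE ->; by rewrite mul0r.
Qed.

Lemma sum_option (R : realFieldType) (T : finType) (F : option T -> R) :
  \sum_o F o = F None + \sum_v F (Some v).
Proof.
rewrite (bigD1 None) //=; congr (_ + _).
rewrite (reindex_omap Some (fun o => o)) /=; last by case.
by apply: eq_bigl => v; rewrite eqxx.
Qed.

Lemma chi_in_P (R : realFieldType) (T : finType) (e : rel T) (S : {set T}) :
  co2plex e S -> co2plex_polytope R e (chi R S).
Proof.
move=> cS; exists 1%N, (fun _ => chi R S), (fun _ => 1); split; first by move=> i; exists S.
split; first by move=> i; exact: ler01.
split; first by rewrite big_ord1.
by move=> t; rewrite big_ord1 mul1r.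
Qed.

Lemma validity (R : realFieldType) (T : finType) (e : rel T) (w : T) (W : {set T}) :
  W \subset nbhd e w ->
  valid_ineq (co2plex_polytope R e) (star_coef R w W) #|W|%:R.
Proof.
move=> sW x [k [p [lam [Hp [Hl [Hs Hx]]]]]].
under eq_bigr do rewrite Hx mulr_sumr.
rewrite exchange_big /=.
apply: le_trans (_ : \sum_i lam i * #|W|%:R <= _); last by rewrite -mulr_suml Hs mul1r.
apply: ler_sum => i _.
have [S [cS ->]] := Hp i.
rewrite (eq_bigr (fun t => lam i * (star_coef R w W t * chi R S t))); last first.
  by move=> t _; rewrite mulrCA.
rewrite -mulr_sumr ler_wpM2l // star_sum.
exact: (@valid_chi R T e w W S sW cS).
Qed.
Lemma face_bound (R : realFieldType) (T : finType) (k : nat) (p : 'I_k -> T -> R)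
  (a : T -> R) (b : R) (t0 : T) :
  a t0 != 0 -> (forall i, \sum_t a t * p i t = b) -> aff_indep p -> (k <= #|T|)%N.
Proof.
move=> a0 Hf Hi.
have := @aff_bound R T k p [set~ t0].
rewrite cardsC1 prednK; last by apply/card_gt0P; exists t0.
apply=> c c0 ct; apply: Hi => // t.
have [->|nt] := eqVneq t t0; last by apply: ct; rewrite !inE.
have E : \sum_t a t * (\sum_i c i * p i t) = 0.
  under eq_bigr do rewrite mulr_sumr.
  rewrite exchange_big /=.
  under eq_bigr do under eq_bigr do rewrite mulrCA.
  under eq_bigr do rewrite -mulr_sumr Hf.
  by rewrite -mulr_suml c0 mul0r.
move: E; rewrite (@bigD1 _ _ _ T t0) //= (@big1 _ _ _ T) ?addr0; last first.
  by move=> s ns0; rewrite ct ?mulr0 // !inE.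
by move/eqP; rewrite mulf_eq0 (negbTE a0) /= => /eqP.
Qed.

Lemma facet (R : realFieldType) (T : finType) (e : rel T) :
  simple_graph e -> tree e ->
  forall (w : T) (W : {set T}), W \subset nbhd e w ->
     defines_facet (co2plex_polytope R e) (star_coef R w W) #|W|%:R.
Proof.
move=> Simple [conn ac] w W sW.
have [sym irr] := Simple.
have wW : w \notin W by apply/negP => /(subsetP sW); rewrite inE irr.
have eW : forall u, u \in W -> e w u by move=> u /(subsetP sW); rewrite inE.
have Wind : forall x y, x \in W -> y \in W -> ~~ e x y.
  by move=> x y hx hy; apply: (@no_triangle T e w x y Simple ac (eW x hx) (eW y hy)).
split; first exact: (@validity R T e w W sW).
have hn : (0 < #|T|)%N by apply/card_gt0P; exists w.
have HT : #|T| = (#|T|.-1).+1 by rewrite prednK.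
exists #|T|.-1; split.
- split.
  + pose q0 := fun o : option T => chi R (if o is Some v then [set v] else set0).
    have := @transfer R T (option T) q0 (#|T|.-1).+2.
    case.
    * by rewrite card_option -HT.
    * move=> c c0 ct.
      have cs : forall t, c (Some t) = 0.
        move=> t; have := ct t; rewrite sum_option /q0 /chi /= inE mulr0 add0r => <-.
        rewrite -[LHS](@sum_pick R T t (fun v => c (Some v))).
        by apply: eq_bigr => v _; rewrite inE eq_sym mulrC.
      case => [t|]; first exact: cs.
      have := c0; rewrite sum_option (@big1 _ _ _ T) ?addr0 // => v _; exact: cs.
    * move=> p [Hp Hi]; exists p; split => // i.
      have [[v|] ->] := Hp i; apply: (@chi_in_P R T e); apply: (@co2plex_small T e) => //.
        by rewrite cards1.
      by rewrite cards0.
  + move=> k p Hp Hi.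
    have := @aff_bound R T k.+1 p setT; rewrite cardsT HT !ltnS; apply.
    by move=> c c0 ct; apply: Hi => // t; apply: ct; rewrite inE.
pose S v := if v == w then W else if v \in W then [set w; v] else v |: W.
have memS : forall v t, (t \in S v) = (if v == w then t \in W else
          if v \in W then (t == w) || (t == v) else (t == v) || (t \in W)).
  by move=> v t; rewrite /S; case: ifP => _ //; case: ifP => _; rewrite !inE.
have cS : forall v, co2plex e (S v).
  move=> v; rewrite /S; case: ifP => [_|/negbT nvw].
    move=> x xW; rewrite (_ : [set u in W | e x u] = set0) ?cards0 //.
    apply/setP => u; rewrite !inE; case uW: (u \in W) => //=.
    exact: negbTE (Wind x u xW uW).
  case vW: (v \in W).
    by apply: (@co2plex_small T e) => //; rewrite cards2; case: (w != v).
  move=> x /setU1P [->|xW].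
    apply/card_le1_eqP => u1 u2; rewrite !inE => /andP [hu1 h1] /andP [hu2 h2].
    have u1W : u1 \in W.
      by move: hu1 => /orP [/eqP eu|//]; move: h1; rewrite eu irr.
    have u2W : u2 \in W.
      by move: hu2 => /orP [/eqP eu|//]; move: h2; rewrite eu irr.
    case: (eqVneq u1 u2) => // n12.
    apply/esym; exact: (@no_square T e w v u1 u2 Simple ac (eW _ u1W) (eW _ u2W) h1 h2 nvw n12).
  apply: leq_trans (subset_leq_card (_ : _ \subset [set v])) _; last by rewrite cards1.
  apply/subsetP => u; rewrite !inE => /andP [/orP [//|uW] h].
  by rewrite (negbTE (Wind x u xW uW)) in h.
have fS : forall v, \sum_t star_coef R w W t * chi R (S v) t = #|W|%:R.
  move=> v; rewrite star_sum /S; case: ifP => [_|/negbT nvw].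
    by rewrite setIid (negbTE wW) mul0r addr0.
  case vW: (v \in W).
    rewrite (_ : W :&: [set w; v] = [set v]); last first.
      apply/setP => t; rewrite !inE; have [->|ntv] := eqVneq t v; first by rewrite vW orbT.
      rewrite orbF; apply/negbTE; apply/andP => -[tW /eqP tw]; by move: wW; rewrite -tw tW.
    by rewrite cards1 !inE eqxx mul1r addrC subrK.
  rewrite (_ : W :&: (v |: W) = W); last first.
    by apply/setP => t; rewrite !inE; case: (t \in W); rewrite ?orbT ?andbF.
  by rewrite !inE eq_sym (negbTE nvw) (negbTE wW) mul0r addr0.
split.
- have := @transfer R T T (fun v => chi R (S v)) (#|T|.-1).+1 HT.
  case.
  + move=> c c0 ct.
    have c_out : forall t, t != w -> t \notin W -> c t = 0.
      move=> t ntw ntW; have := ct t.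
      rewrite (@bigD1 _ _ _ T t) //= /chi memS (negbTE ntw) (negbTE ntW) eqxx mulr1.
      rewrite (@big1 _ _ _ T) ?addr0 // => v nvt.
      by rewrite memS (negbTE ntW) (negbTE ntw) (eq_sym t v) (negbTE nvt) /= !if_same mulr0.
    have cw_sum : \sum_v c v * (v \in W)%:R = 0.
      rewrite -[RHS](ct w); apply: eq_bigr => v _; congr (_ * _); rewrite /chi memS.
      case: (eqVneq v w) => [->|nvw]; first by rewrite (negbTE wW).
      by case vW: (v \in W) => //=; rewrite ?eqxx ?(negbTE wW).
    have cdec : forall v, c v = c v * (v \in W)%:R + (v == w)%:R * c v.
      move=> v; case: (eqVneq v w) => [->|nvw]; first by rewrite (negbTE wW) mulr0 add0r mul1r.
      rewrite mul0r addr0; case vW: (v \in W); first by rewrite mulr1.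
      by rewrite c_out ?vW ?mul0r.
    have cw0 : c w = 0.
      move: c0; rewrite (eq_bigr (fun v => c v * (v \in W)%:R + (v == w)%:R * c v)); last first.
        by move=> v _; rewrite -cdec.
      by rewrite big_split /= cw_sum add0r sum_pick.
    have cu : forall u, u \in W -> c u = 0.
      move=> u uW; have unw : u != w by apply: contraNneq wW => <-.
      have := ct u.
      rewrite (eq_bigr (fun v => (v == w)%:R * c v + (v == u)%:R * c v)); last first.
        move=> v _; rewrite /chi memS; case: (eqVneq v w) => [->|nvw].
          by rewrite uW mulr1 eq_sym (negbTE unw) mul0r addr0 mul1r.
        rewrite mul0r add0r; case vW: (v \in W).
          by rewrite (negbTE unw) /= eq_sym mulrC.
        have nvu : v != u by apply: contraFneq vW => ->.
        by rewrite (negbTE nvu) mul0r c_out ?vW ?mul0r.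
      by rewrite big_split /= !sum_pick cw0 add0r.
    move=> v; case: (eqVneq v w) => [->//|nvw]; case vW: (v \in W); first exact: cu.
    by apply: c_out; rewrite ?vW.
  + move=> p [Hp Hi]; exists p; split => // i.
    have [v ->] := Hp i; split; [exact: (@chi_in_P R T e) | exact: fS].
- move=> k p Hp Hi.
  have [t0 a0] : exists t0, star_coef R w W t0 != 0.
    have [W0|[u uW]] := set_0Vmem W.
      exists w; rewrite /star_coef eqxx W0 inE cards0 add0r sub0r oppr_eq0 oner_eq0 //.
    exists u; have unw : u != w by apply: contraNneq wW => <-.
    by rewrite /star_coef uW (negbTE unw) addr0 oner_eq0.
  have := @face_bound R T k.+1 p _ _ t0 a0 (fun i => (Hp i).2) Hi.
  by rewrite HT ltnS.
Qed.

Theorem mainTheorem7 (R : realFieldType) (T : finType) (e : rel T) :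
  simple_graph e -> connected_graph e ->
  (forall (w : T) (W : {set T}), W \subset nbhd e w ->
     valid_ineq (co2plex_polytope R e) (star_coef R w W) #|W|%:R) /\
  (tree e ->
   forall (w : T) (W : {set T}), W \subset nbhd e w ->
     defines_facet (co2plex_polytope R e) (star_coef R w W) #|W|%:R).
Proof.
move=> Hs _; split; first by move=> w W; exact: (@validity R T e w W).
by move=> Ht; exact: (@facet R T e Hs Ht).
Qed.
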